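(* A subset $S\subseteq N^{\mathbb N}$ is a safety constraint if and only if there exists $P\in\Omega$ (a prefix-free subset of $N^+$) such that $S=C_\omega(P)$, where $\omega$ is the final detector.
   Context: Fix a finite nonempty set $N$; $N^+$ is the set of nonempty finite words, $N^{\mathbb N}$ the set of streams; $s[0{:}m]$ is the prefix of length $m$, $s[m{:}]$ the suffix $k\mapsto s(k+m)$; for a set $A$ of words, $n^{-1}\cdot A=\{u:nu\in A\}$; a set of words is prefix-free if no proper prefix (including the empty word) of a member is a member. A safety constraint is a set $S\subseteq N^{\mathbb N}$ such that any $s$ with ''for every $m$ there is $s'\in S$ with $s'[0{:}m]=s[0{:}m]$'' belongs to $S$. Let $\mathbf 1=\{\Downarrow\}$. A detector is a set $|a|$ with $a:|a|\to(\mathbf 1+|a|)^N$. The final detector $\omega$ has carrier $\Omega$, the set of prefix-free subsets of $N^+$, with $\omega(P)(n)=\Downarrow$ if $n\in P$ and $n^{-1}\cdot P$ otherwise. For $s\in N^{\mathbb N}$, $\mathrm{Join}([s],a)$ maps $(t,y)\in\{s[k{:}]\}\times|a|$ to $\Downarrow$ if $a(y)(t(0))=\Downarrow$, else to $(t[1{:}],a(y)(t(0)))$; iterates $g^{(1)}=g$, $g^{(k+1)}(z)=\Downarrow$ if $g^{(k)}(z)=\Downarrow$, else $g(g^{(k)}(z))$. $C_a(x)=\{s\in N^{\mathbb N}:\mathrm{Join}([s],a)^{(k)}(s,x)\neq\Downarrow\ \forall k\ge1\}$. *)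

(* Defs.v *)
From mathcomp Require Import all_boot.
Set Implicit Arguments. Unset Strict Implicit. Unset Printing Implicit Defensive.

Section Detectors.
Variable N : finType.

Definition stream := nat -> N.

Definition safety (S : stream -> Prop) : Prop :=
  forall s : stream,
    (forall m : nat, exists s' : stream, S s' /\ (forall k, k < m -> s' k = s k)) ->
    S s.

Definition prefix_free (P : pred (seq N)) : Prop :=
  (forall w, P w -> w <> [::]) /\
  (forall u v, P u -> P (u ++ v) -> v = [::]).

Definition Omega := {P : pred (seq N) | prefix_free P}.

Definition lquot (n : N) (P : pred (seq N)) : pred (seq N) := fun u => P (n :: u).

Lemma lquot_prefix_free (P : pred (seq N)) (n : N) :
  prefix_free P -> ~~ P [:: n] -> prefix_free (lquot n P).
Proof.
move=> [H1 H2] Hn; split.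
- by move=> w Pw Ew; subst w; rewrite /lquot in Pw; rewrite Pw in Hn.
- by move=> u v Pu Puv; apply: (H2 (n :: u) v).
Qed.

(* A detector with carrier X: a : X -> (1 + X)^N, encoding ⇓ as None. *)
Definition detector (X : Type) := X -> N -> option X.

Definition omega : detector Omega :=
  fun P n =>
    match boolP (sval P [:: n]) with
    | AltTrue _ => None
    | AltFalse h => Some (exist _ (lquot n (sval P)) (lquot_prefix_free (svalP P) h))
    end.

Definition join (X : Type) (a : detector X) (z : stream * X) : option (stream * X) :=
  match a z.2 (z.1 0) with
  | None => None
  | Some y' => Some ((fun k => z.1 k.+1), y')
  end.

(* Iterates: giter g 1 = g, giter g (k+1) z = ⇓ if giter g k z = ⇓ else g (giter g k z).
   (giter g 0 is the identity and is never used.) *)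
Fixpoint giter (Z : Type) (g : Z -> option Z) (k : nat) (z : Z) : option Z :=
  match k with
  | 0 => Some z
  | k'.+1 => match giter g k' z with None => None | Some z' => g z' end
  end.

Definition C (X : Type) (a : detector X) (x : X) (s : stream) : Prop :=
  forall k, 1 <= k -> giter (join a) k (s, x) <> None.

End Detectors.

(* Main.v *)
Require Import Defs.
From mathcomp Require Import all_boot.
From Stdlib Require Import ClassicalEpsilon Classical.
Set Implicit Arguments. Unset Strict Implicit.

Section S.
Variable N : finType.

Definition pre (s : stream N) (m : nat) : seq N := [seq s i | i <- iota 0 m].

Lemma size_pre s m : size (pre s m) = m.
Proof. by rewrite /pre size_map size_iota. Qed.

Lemma preS s m : pre s m.+1 = pre s m ++ [:: s m].
Proof. by rewrite /pre -addn1 iotaD map_cat. Qed.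

Lemma take_pre s i j : i <= j -> take i (pre s j) = pre s i.
Proof. by move=> hij; rewrite /pre -map_take take_iota (minn_idPl hij). Qed.

Lemma pre_eq s s' m : (forall k, k < m -> s' k = s k) -> pre s' m = pre s m.
Proof. move=> H; apply/eq_in_map => k; rewrite mem_iota add0n => /andP[_ hk]; exact: H. Qed.

Lemma pre_eq' s s' m : pre s' m = pre s m -> (forall k, k < m -> s' k = s k).
Proof.
move=> H k hk.
have := congr1 (fun w => nth (s 0) w k) H.
by rewrite /= !(nth_map 0) ?size_iota // nth_iota.
Qed.

Lemma giter_char (P : Omega N) (s : stream N) k :
  (giter (join (@omega N)) k (s, P) = None /\
     exists j, 1 <= j <= k /\ sval P (pre s j)) \/
  (exists t Q, giter (join (@omega N)) k (s, P) = Some (t, Q) /\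
     (forall i, t i = s (k + i)) /\
     (forall u, sval Q u = sval P (pre s k ++ u)) /\
     (forall j, 1 <= j <= k -> ~~ sval P (pre s j))).
Proof.
elim: k => [|k [[E [j [hj Pj]]]|[t [Q [E [Ht [HQ Hj]]]]]]].
- right; exists s, P; split=> //; split=> // ; split=> // j /andP[a b].
  by have := leq_trans a b.
- left; split; first by rewrite /= E.
  exists j; split=> //; case/andP: hj => a b; rewrite a /=; exact: leqW.
- rewrite /= E /join /= /omega.
  destruct (boolP (sval Q [:: t 0])) as [h|h].
  + left; split=> //; exists k.+1; split; first by rewrite ltn0Sn leqnn.
    by rewrite preS -HQ (_ : s k = t 0) // Ht addn0.
  + right; eexists; eexists; split; first reflexivity.
    split; first by move=> i /=; rewrite Ht addnS.
    split.
    * move=> u; change (sval Q (t 0 :: u) = sval P (pre s k.+1 ++ u)); by rewrite HQ preS -catA (_ : s k = t 0) // Ht addn0.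
    * move=> j /andP[a b]; rewrite leq_eqVlt in b; case/orP: b => [/eqP->|b].
      - by rewrite preS -HQ (_ : s k = t 0) // Ht addn0.
      - by apply: Hj; rewrite a.
Qed.

Lemma C_char (P : Omega N) s :
  C (@omega N) P s <-> forall j, 1 <= j -> ~~ sval P (pre s j).
Proof.
split.
- move=> HC j hj; case: (giter_char P s j) => [[E _]|[t [Q [_ [_ [_ H]]]]]].
  + by have := HC j hj.
  + by apply: H; rewrite hj leqnn.
- move=> H k hk; case: (giter_char P s k) => [[_ [j [hj Pj]]]|[t [Q [E _]]]].
  + by case/andP: hj => a _; have := H j a; rewrite Pj.
  + by rewrite E.
Qed.

Definition asb (Q : Prop) : bool := if excluded_middle_informative Q then true else false.
Lemma asbP Q : asb Q <-> Q.
Proof. by rewrite /asb; case: excluded_middle_informative. Qed.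

End S.

Theorem mainTheorem13 (N : finType) (hN : 0 < #|N|) (S : stream N -> Prop) :
  safety S <-> exists P : Omega N, forall s : stream N, S s <-> C (@omega N) P s.
Proof.
split.
- move=> HS.
  pose bad (w : seq N) := ~ exists s, S s /\ pre s (size w) = w.
  pose Pp (w : seq N) := w <> [::] /\ bad w /\
     forall i, 0 < i < size w -> ~ bad (take i w).
  have pf : prefix_free (fun w => asb (Pp w)).
    split.
    + by move=> w /asbP [].
    + move=> u v /asbP [hu [bu _]] /asbP [_ [_ Hm]].
      case: v Hm => // x v Hm; exfalso; apply: (Hm (size u)).
      * rewrite size_cat /= addnS ltnS leq_addr andbT lt0n size_eq0.
        by apply/eqP.
      * by rewrite take_size_cat.
  exists (exist _ _ pf) => s; rewrite C_char /=; split.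
  + move=> Ss j hj; apply/negP => /asbP [_ [bj _]]; apply: bj; exists s; split=> //.
    by rewrite size_pre.
  + move=> H; apply: HS => m; apply: NNPP => Hn.
    have bm : bad (pre s (maxn m 1)).
      move=> [s' [Ss' E]]; apply: Hn; exists s'; split=> // k hk.
      rewrite size_pre in E; apply: (pre_eq' E).
      by apply: (leq_trans hk); rewrite leq_maxl.
    have key : forall n, forall j, j <= n -> 1 <= j -> bad (pre s j) ->
        exists i, 1 <= i /\ Pp (pre s i).
      elim=> [|n IH] j hjn hj bj.
      * by move: (leq_trans hj hjn).
      * case: (classic (exists i, 0 < i < j /\ bad (pre s i))) => [[i [hi bi]]|Hno].
        - case/andP: hi => a b; apply: (IH i) => //.
          by rewrite -ltnS (leq_trans b hjn).
        - exists j; split=> //; split.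
          + by case: j hj {hjn bj Hno}.
          + split=> // i; rewrite size_pre => hi bi; apply: Hno; exists i.
            split=> //; case/andP: hi => _ b.
            by rewrite -(take_pre s (ltnW b)).
    have [i [hi Pi]] := key _ _ (leqnn _) (leq_maxr m 1) bm.
    by have := H i hi; rewrite (proj2 (asbP _) Pi).
- move=> [P HP] s Hs; apply/HP; apply/C_char => j hj; apply/negP => Pj.
  have [s' [Ss' E]] := Hs j.
  have /C_char := proj1 (HP s') Ss'.
  by move=> /(_ j hj); rewrite (pre_eq E) Pj.
Qed.
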